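(* For all $X,Y\in\mathbb{R}$ and all integers $p,q\geq1$, \begin{align*} \binom{p+q}{q}\mathcal{B}_{p}(X+Y)\mathcal{B}_{q}(Y) &=\sum_{j=0}^{p+q}\binom{p+q}{j}\binom{p+q-1-j}{q-1}\mathcal{B}_{p+q-j}(Y)\mathcal{B}_{j}(X)\\ &\quad+\sum_{h=0}^{q}\binom{p+q}{h}\binom{p+q-1-h}{p-1}(-1)^{h}\mathcal{B}_{p+q-h}(X+Y)\mathcal{B}_{h}(X). \end{align*}
   Context: $B_n(x)$ denotes the $n$th Bernoulli polynomial, defined by $\frac{te^{xt}}{e^t-1}=\sum_{n\ge0}B_n(x)\frac{t^n}{n!}$, and $\mathcal{B}_n(x)=B_n(x-[x])$ is the $n$th Bernoulli function, where $[x]$ is the largest integer $\le x$ (so $\mathcal{B}_0\equiv1$ and $\mathcal{B}_1(m)=-1/2$ for $m\in\mathbb{Z}$). Binomial coefficients with integer upper entry $n$ (possibly negative) and integer lower entry $k\ge0$ are $\binom{n}{k}=\frac{n(n-1)\cdots(n-k+1)}{k!}$; in particular $\binom{-1}{k}=(-1)^k$ and $\binom{n}{k}=0$ for $0\le n<k$. *)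

(* Defs.v *)
From HB Require Import structures.
From mathcomp Require Import all_boot all_order all_algebra.
From mathcomp Require Import reals.
Set Implicit Arguments. Unset Strict Implicit. Unset Printing Implicit Defensive.
Import Order.TTheory GRing.Theory Num.Theory.
Local Open Scope ring_scope.

(* Bernoulli numbers b_0, ..., b_n (convention b_1 = -1/2, i.e. t/(e^t-1)),
   via the standard recursion  b_n = -1/(n+1) * sum_{k<n} C(n+1,k) b_k. *)
Fixpoint bnums (R : realType) (n : nat) : seq R :=
  match n with
  | 0 => [:: 1]
  | n'.+1 => let s := bnums R n' in
      rcons s (- (n'.+2)%:R^-1 * \sum_(k < n'.+1) ('C(n'.+2, k))%:R * s`_k)
  end.

Definition bernnum (R : realType) (n : nat) : R := (bnums R n)`_n.

Definition bernpoly (R : realType) (n : nat) (x : R) : R :=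
  \sum_(k < n.+1) ('C(n, k))%:R * bernnum R k * x ^+ (n - k).

Definition bernfun (R : realType) (n : nat) (x : R) : R :=
  bernpoly n (x - (Num.floor x)%:~R).

Definition binomZ (R : realType) (n : int) (k : nat) : R :=
  (\prod_(i < k) ((n - i%:Z)%:~R : R)) / (k`!)%:R.

(* Main.v *)
Require Import Defs.
From mathcomp Require Import all_boot all_order all_algebra.
From mathcomp Require Import reals.
From mathcomp Require Import ring lra zify.
From mathcomp Require Import boolp classical_sets functions topology normedtype derive realfun.
Import GRing.Theory Num.Theory numFieldNormedType.Exports.
Local Open Scope ring_scope.

Section S.
Variable R : realType.
Implicit Types (x y c : R).

Lemma dsum n (F : 'I_n -> R -> R) (dF : 'I_n -> R) x :
  (forall i, is_derive x 1 (F i) (dF i)) ->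
  is_derive x 1 (fun t => \sum_(i < n) F i t) (\sum_(i < n) dF i).
Proof.
move=> H.
have -> : (fun t => \sum_(i < n) F i t) = \sum_(i < n) F i.
  by apply/funext => t; rewrite fct_sumE.
exact: is_derive_sum.
Qed.

Lemma dmul (f g : R -> R) df dg x :
  is_derive x 1 f df -> is_derive x 1 g dg ->
  is_derive x 1 (fun t => f t * g t) (f x * dg + g x * df).
Proof.
move=> Hf Hg.
have -> : (fun t => f t * g t) = (f * g) by apply/funext.
exact: is_deriveM.
Qed.

Lemma dsub (f g : R -> R) df dg x :
  is_derive x 1 f df -> is_derive x 1 g dg ->
  is_derive x 1 (fun t => f t - g t) (df - dg).
Proof.
move=> Hf Hg.
have -> : (fun t => f t - g t) = (f - g) by apply/funext.
exact: is_deriveB.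
Qed.

Lemma dcst c x : is_derive x 1 (fun _ : R => c) 0.
Proof. exact: is_derive_cst. Qed.

Lemma dpow m c x : is_derive x 1 (fun t => (t + c) ^+ m) (m%:R * (x + c) ^+ m.-1).
Proof.
have -> : (fun t => (t + c) ^+ m) = horner (('X + c%:P) ^+ m).
  by apply/funext => t; rewrite horner_exp hornerD hornerX hornerC.
apply: is_derive_eq.
rewrite deriv_exp derivD derivX derivC addr0 mul1r hornerMn horner_exp hornerD hornerX hornerC.
by rewrite mulr_natl.
Qed.

Lemma dscal (f : R -> R) k df x :
  is_derive x 1 f df -> is_derive x 1 (fun t => k * f t) (k * df).
Proof.
move=> Hf.
have -> : (fun t => k * f t) = (k *: f) by apply/funext.
exact: is_deriveZ.
Qed.

Lemma did x : is_derive x 1 (fun t : R => t) 1.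
Proof. exact: is_derive_id. Qed.

Arguments dsum {n F dF x}.
Arguments dmul {f g df dg x}.
Arguments dsub {f g df dg x}.
Arguments dscal {f} k {df x}.

Lemma cst_of_deriv (f : R -> R) (k : R) :
  (forall x : R, is_derive x 1 f k) -> forall x, f x = f 0 + k * x.
Proof.
move=> H x.
have H2 : forall t : R, is_derive t 1 (fun s => f s - k * s) 0.
  move=> t; apply: is_derive_eq.
  by rewrite /GRing.scale /= mulr1 subrr.
have := is_derive_0_is_cst x 0 H2.
rewrite mulr0 subr0 => <-.
by rewrite subrK.
Qed.

Arguments cst_of_deriv {f k}.

Notation b := (bernnum R).
Notation B := (@bernpoly R).

Lemma bnums_size n : size (bnums R n) = n.+1.
Proof. by elim: n => [|n IH] //=; rewrite size_rcons IH. Qed.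

Lemma bnums_nth n k : (k <= n)%N -> (bnums R n)`_k = b k.
Proof.
rewrite /bernnum; elim: n => [|n IH] kn.
  by move: kn; rewrite leqn0 => /eqP ->.
rewrite leq_eqVlt in kn; case/orP: kn => [/eqP -> //|kn].
by rewrite /= nth_rcons bnums_size kn IH.
Qed.

Lemma bern0 : b 0 = 1.
Proof. by []. Qed.

Lemma bernS n : b n.+1 = - (n.+2)%:R^-1 * \sum_(k < n.+1) ('C(n.+2, k))%:R * b k.
Proof.
rewrite {1}/bernnum /= nth_rcons bnums_size ltnn eqxx.
congr (_ * _); apply: eq_bigr => i _; by rewrite bnums_nth // -ltnS.
Qed.

Lemma bern_rec n : \sum_(k < n.+2) ('C(n.+2, k))%:R * b k = 0.
Proof.
rewrite big_ord_recr /= bernS binSn.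
set S := \sum_(i < n.+1) _.
rewrite mulrA mulrN mulrV; first by rewrite mulN1r subrr.
by rewrite unitfE pnatr_eq0.
Qed.

Lemma B0 x : B 0 x = 1.
Proof. by rewrite /bernpoly big_ord1 bin0 mul1r bern0 mul1r expr0. Qed.

Lemma Bat0 n : B n 0 = b n.
Proof.
rewrite /bernpoly big_ord_recr /= subnn expr0 binn mul1r mulr1 big1 ?add0r //.
move=> i _; rewrite expr0n subn_eq0 leqNgt ltn_ord /= mulr0 //.
Qed.

Lemma Bat1 n : B n 1 = b n + (n == 1%N)%:R.
Proof.
case: n => [|n]; first by rewrite B0 bern0 addr0.
case: n => [|n].
  rewrite /bernpoly !big_ord_recr big_ord0 /= add0r bern0 (bernS 0) big_ord1.
  by rewrite !expr1n !mulr1 !bin0 !mul1r /= addrC.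
rewrite /bernpoly big_ord_recr /= subnn binn mul1r expr0 mulr1 addrC addr0.
rewrite -[RHS]addr0; congr (_ + _).
under eq_bigr do rewrite expr1n mulr1.
by rewrite bern_rec.
Qed.

Lemma dB n c x :
  is_derive x 1 (fun t => B n (t + c)) (n%:R * B n.-1 (x + c)).
Proof.
rewrite /bernpoly.
have H := @dsum n.+1 (fun i t => 'C(n, i)%:R * b i * (t + c) ^+ (n - i)) _ x
  (fun i => @dscal _ _ _ x (dpow (n - i) c x)).
refine (is_derive_eq H _); clear H.
case: n => [|n].
  by rewrite big_ord1 subnn mul0r mulr0 mul0r.
rewrite big_ord_recr /= subnn mul0r mulr0 addr0 mulr_sumr.
apply: eq_bigr => i _.
have hi : (i <= n)%N by rewrite -ltnS.
rewrite subSn //=.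
rewrite !mulrA -natrM mul_bin_down subSn // natrM.
set u := (n - i).+1%:R; set v := 'C(n.+1, i)%:R; set w := b i; set z := (x + c) ^+ (n - i).
ring.
Qed.

Lemma dB0 n x : is_derive x 1 (fun t => B n t) (n%:R * B n.-1 x).
Proof.
have := dB n 0 x; rewrite addr0.
have -> : (fun t => B n (t + 0)) = (fun t => B n t) by apply/funext => t; rewrite addr0.
by [].
Qed.

Lemma Bdiff n t : B n (t + 1) = B n t + n%:R * t ^+ n.-1.
Proof.
elim: n t => [|n IH] t; first by rewrite !B0 mul0r addr0.
have H : forall x, is_derive x 1 (fun t => B n.+1 (t + 1) - B n.+1 t - n.+1%:R * (t + 0) ^+ n) 0.
  move=> x.
  refine (is_derive_eq (dsub (dsub (dB n.+1 1 x) (dB0 n.+1 x)) (dscal n.+1%:R (dpow n 0 x))) _).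
  rewrite /= IH addr0; case: n {IH} => [|n] /=; ring.
have := cst_of_deriv H t; rewrite mul0r addr0 !addr0 add0r Bat1 Bat0.
rewrite expr0n; case: n {IH H} => [|n] /=.
  by move=> E; apply/eqP; rewrite -subr_eq0 opprD addrA E; apply/eqP; ring.
by move=> E; apply/eqP; rewrite -subr_eq0 opprD addrA E; apply/eqP; ring.
Qed.

Lemma dBneg n x : is_derive x 1 (fun t => B n (- t)) (- (n%:R * B n.-1 (- x))).
Proof.
have H := @is_derive1_comp R (fun s => B n s) (fun t => - t) x _ _ (dB0 n (- x)) (is_deriveNid x 1).
refine (is_derive_eq H _).
by rewrite mulrN1.
Qed.

Definition Sf n t := B n (t + 1) - (-1) ^+ n * B n (- t).

Lemma dS n x : is_derive x 1 (Sf n) (n%:R * Sf n.-1 x).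
Proof.
refine (is_derive_eq (dsub (dB n 1 x) (dscal ((-1) ^+ n) (dBneg n x))) _).
rewrite /Sf; case: n => [|n]; first by ring.
rewrite /= exprS; ring.
Qed.

Lemma Sf0 n : (forall x, Sf n x = 0) -> forall x, Sf n.+1 x = Sf n.+1 0.
Proof.
move=> H x.
have H2 : forall t : R, is_derive t 1 (Sf n.+1) 0.
  by move=> t; refine (is_derive_eq (dS _ _) _); rewrite /= H mulr0.
by rewrite (cst_of_deriv H2 x) mul0r addr0.
Qed.
Arguments Sf0 {n}.

Lemma Sf_zero n x : Sf n x = 0.
Proof.
elim: n x => [|n IH] x; first by rewrite /Sf !B0 expr0 mul1r subrr.
rewrite (Sf0 IH x).
set k := Sf n.+1 0.
have H : forall t : R, is_derive t 1 (Sf n.+2) (n.+2%:R * k).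
  by move=> t; refine (is_derive_eq (dS _ _) _); rewrite /= (Sf0 IH t).
have := cst_of_deriv H 1; rewrite mulr1.
have E : Sf n.+2 1 = Sf n.+2 0.
  rewrite /Sf add0r oppr0.
  rewrite Bdiff expr1n mulr1.
  have -> : B n.+2 0 = B n.+2 (-1 + 1) by rewrite addNr.
  rewrite Bdiff /= exprS.
  set s := (-1) ^+ n.+1.
  have s2 : s * s = 1 by rewrite /s -exprD -signr_odd oddD addbb.
  apply/eqP; rewrite -subr_eq0; apply/eqP.
  transitivity (n.+2%:R * (1 - s * s)); first ring.
  by rewrite s2 subrr mulr0.
rewrite E => E2.
have : n.+2%:R * k = 0 by apply: (addrI (Sf n.+2 0)); rewrite addr0 -E2.
by move/eqP; rewrite mulf_eq0 pnatr_eq0 /= => /eqP.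
Qed.

Lemma Brefl n w :
  B n (w + 1) = \sum_(k < n.+1) 'C(n, k)%:R * ((-1) ^+ k * b k) * w ^+ (n - k).
Proof.
have := Sf_zero n w; rewrite /Sf => /eqP; rewrite subr_eq0 => /eqP ->.
rewrite /bernpoly mulr_sumr; apply: eq_bigr => k _.
have hk : (k <= n)%N by rewrite -ltnS.
have -> : ((-1) ^+ n : R) = (-1) ^+ k * (-1) ^+ (n - k) by rewrite -exprD subnKC.
rewrite [(- w) ^+ _]exprNn.
set s := (-1) ^+ (n - k).
have s2 : s * s = 1 by rewrite /s -exprD -signr_odd oddD addbb.
clearbody s.
transitivity ('C(n, k)%:R * ((-1) ^+ k * b k) * w ^+ (n - k) * (s * s)); last by rewrite s2 mulr1.
ring.
Qed.

Notation cZ := (binomZ R).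

Definition PZ (n : int) k : R := \prod_(i < k) ((n - i%:Z)%:~R : R).

Lemma cZE n k : cZ n k = PZ n k / k`!%:R.
Proof. by []. Qed.

Lemma fact_neq0 k : (k`!%:R : R) != 0.
Proof. by rewrite pnatr_eq0 -lt0n fact_gt0. Qed.

Lemma cZ0 n : cZ n 0 = 1.
Proof. by rewrite cZE /PZ big_ord0 divr1. Qed.

Lemma PZSl n k : PZ n k.+1 = n%:~R * PZ (n - 1) k.
Proof.
rewrite /PZ big_ord_recl /= subr0; congr (_ * _).
apply: eq_bigr => i _; congr (_ %:~R).
rewrite /bump /= add1n -addn1 PoszD; lia.
Qed.

Lemma PZSr n k : PZ n k.+1 = PZ n k * (n - k%:Z)%:~R.
Proof. by rewrite /PZ big_ord_recr. Qed.

Lemma cZ_pascal n k : cZ n k.+1 = cZ (n - 1) k.+1 + cZ (n - 1) k.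
Proof.
rewrite !cZE.
have E : PZ n k.+1 = PZ (n - 1) k.+1 + k.+1%:R * PZ (n - 1) k.
  rewrite PZSl PZSr !intrB.
  ring.
rewrite E mulrDl; congr (_ + _).
rewrite factS natrM.
have h1 := fact_neq0 k.
have h2 : (k.+1%:R : R) != 0 by rewrite pnatr_eq0.
field.
by rewrite h1 addrC natr1 pnatr_eq0.
Qed.

Lemma cZ_nat n k : cZ n%:Z k = 'C(n, k)%:R.
Proof.
elim: n k => [|n IH] [|k]; rewrite ?cZ0 ?bin0 //.
  by rewrite cZE PZSl mul0r mul0r bin0n.
rewrite cZ_pascal binS natrD -!IH; congr (cZ _ _ + cZ _ _); lia.
Qed.

Lemma cZ_neg1 k : cZ (-1) k = (-1) ^+ k.
Proof.
elim: k => [|k IH]; first by rewrite cZ0.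
have := cZ_pascal 0 k; rewrite cZ_nat bin0n /= sub0r IH exprS => /eqP.
by rewrite eq_sym addr_eq0 mulN1r => /eqP.
Qed.

Definition T1 q a p x y := 'C(p + q, q)%:R * B p (x + (y + a)) * B q y.
Definition S1 q p x y := \sum_(j < (p + q).+1)
  'C(p + q, j)%:R * cZ ((p + q)%:Z - 1 - j%:Z) (q - 1) * B (p + q - j) y * B j x.
Definition S2 q a p x y := \sum_(h < q.+1)
  'C(p + q, h)%:R * cZ ((p + q)%:Z - 1 - h%:Z) (p - 1) * (-1) ^+ h
    * B (p + q - h) (x + (y + a)) * B h x.
Definition H q a p x y := T1 q a p x y - S1 q p x y - S2 q a p x y.

Lemma dT1 q a p y x :
  is_derive x 1 (fun t => T1 q a p.+1 t y) ((p.+1 + q)%:R * T1 q a p x y).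
Proof.
refine (is_derive_eq (dmul (dscal ('C(p.+1 + q, q)%:R) (dB p.+1 (y + a) x)) (dcst (B q y) x)) _).
rewrite /T1 mulr0 add0r /=.
have E : ('C(p.+1 + q, q) * p.+1 = (p.+1 + q) * 'C(p + q, q))%N.
  rewrite [in RHS](_ : p + q = (p.+1 + q).-1)%N; last by rewrite addSn.
  by rewrite mul_bin_down addnK mulnC.
transitivity (('C(p.+1 + q, q) * p.+1)%:R * B p (x + (y + a)) * B q y).
  rewrite natrM; set u := B p _; set v := B q y; ring.
rewrite E natrM; set u := B p _; set v := B q y; ring.
Qed.

Lemma dS1 q p y x :
  is_derive x 1 (fun t => S1 q p.+1 t y) ((p.+1 + q)%:R * S1 q p x y).
Proof.
refine (is_derive_eq (dsum (fun j => dmul (dcst ('C(p.+1 + q, j)%:R *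
   cZ ((p.+1 + q)%:Z - 1 - j%:Z) (q - 1) * B (p.+1 + q - j) y) x) (dB0 j x))) _).
rewrite /S1 big_ord_recl /= mul0r !mulr0 !add0r addSn [RHS]mulr_sumr.
apply: eq_bigr => j _; rewrite /bump /= add1n mulr0 addr0.
have E1 : (((p + q).+1)%:Z - 1 - j.+1%:Z) = ((p + q)%:Z - 1 - j%:Z) by lia.
have E2 : ((p + q).+1 - j.+1 = p + q - j)%N by rewrite subSS.
have E3 : ('C((p + q).+1, j.+1) * j.+1 = (p + q).+1 * 'C(p + q, j))%N.
  by rewrite mulnC -mul_bin_diag.
rewrite E1 E2.
set u := cZ _ _; set v := B (p + q - j) y; set w := B j x.
transitivity (('C((p + q).+1, j.+1) * j.+1)%:R * u * v * w).
  rewrite natrM; ring.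
rewrite E3 natrM; ring.
Qed.

Definition dd q p h := cZ ((p.+1 + q)%:Z - 1 - h%:Z) p.
Definition G q a p x y := \sum_(h < q) 'C(p + q, h)%:R * (dd q p h - dd q p h.+1) * (-1) ^+ h
    * B (p + q - h) (x + (y + a)) * B h x
  + 'C(p + q, q)%:R * dd q p q * (-1) ^+ q * B (p + q - q) (x + (y + a)) * B q x.

Lemma dS2raw q a p y x :
  is_derive x 1 (fun t => S2 q a p.+1 t y) ((p.+1 + q)%:R * G q a p x y).
Proof.
pose K h := 'C(p.+1 + q, h)%:R * cZ ((p.+1 + q)%:Z - 1 - h%:Z) (p.+1 - 1) * (-1) ^+ h.
refine (is_derive_eq (dsum (fun h : 'I_q.+1 => dmul (dscal (K h) (dB (p.+1 + q - h) (y + a) x)) (dB0 h x))) _).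
rewrite big_split /=.
set z := x + (y + a).
have Hb : \sum_(h < q.+1) K h * B (p.+1 + q - h) z * (h%:R * B h.-1 x) =
   - ((p.+1 + q)%:R * \sum_(h < q) 'C(p + q, h)%:R * dd q p h.+1 * (-1) ^+ h * B (p + q - h) z * B h x).
  rewrite big_ord_recl /= mul0r mulr0 add0r mulr_sumr -sumrN.
  apply: eq_bigr => h _; rewrite /bump /= add1n /K subn1 /=.
  have E2 : (p.+1 + q - h.+1 = p + q - h)%N by rewrite addSn subSS.
  have E3 : ('C(p.+1 + q, h.+1) * h.+1 = (p.+1 + q) * 'C(p + q, h))%N.
    by rewrite mulnC -mul_bin_diag addSn.
  rewrite E2 /dd.
  set u := cZ _ _; set v := B (p + q - h) z; set w := B h x.
  transitivity (('C(p.+1 + q, h.+1) * h.+1)%:R * u * (-1) ^+ h.+1 * v * w).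
    rewrite natrM; ring.
  rewrite E3 natrM exprS; ring.
have Ha : \sum_(h < q.+1) B h x * (K h * ((p.+1 + q - h)%:R * B (p.+1 + q - h).-1 z)) =
   (p.+1 + q)%:R * \sum_(h < q.+1) 'C(p + q, h)%:R * dd q p h * (-1) ^+ h * B (p + q - h) z * B h x.
  rewrite mulr_sumr; apply: eq_bigr => h _; rewrite /K subn1 /=.
  have hq : (h <= q)%N by rewrite -ltnS.
  have E2 : (p.+1 + q - h = (p + q - h).+1)%N by rewrite addSn subSn // (leq_trans hq) // leq_addl.
  have E3 : ('C(p.+1 + q, h) * (p.+1 + q - h) = (p.+1 + q) * 'C(p + q, h))%N.
    rewrite [in RHS](_ : p + q = (p.+1 + q).-1)%N; last by rewrite addSn.
    by rewrite mul_bin_down mulnC.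
  rewrite [in B _ z]E2 /= /dd.
  set u := cZ _ _; set v := B (p + q - h) z; set w := B h x.
  transitivity (('C(p.+1 + q, h) * (p.+1 + q - h))%:R * u * (-1) ^+ h * v * w).
    rewrite natrM; ring.
  rewrite E3 natrM; ring.
rewrite Hb Ha big_ord_recr /= /G.
have -> : \sum_(h < q) 'C(p + q, h)%:R * (dd q p h - dd q p h.+1) * (-1) ^+ h * B (p + q - h) z * B h x
  = \sum_(h < q) 'C(p + q, h)%:R * dd q p h * (-1) ^+ h * B (p + q - h) z * B h x
   - \sum_(h < q) 'C(p + q, h)%:R * dd q p h.+1 * (-1) ^+ h * B (p + q - h) z * B h x.
  by rewrite -sumrB; apply: eq_bigr => h _; ring.
set s1 := \sum_(h < q) _; set s2 := \sum_(h < q) _.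
ring.
Qed.

Lemma cZnn n : cZ n%:Z n = 1.
Proof. by rewrite cZ_nat binn. Qed.

Lemma cZ_eq1 n k : n = k%:Z -> cZ n k = 1.
Proof. by move=> ->; rewrite cZnn. Qed.

Lemma G_succ q a m x y : G q a m.+1 x y = S2 q a m.+1 x y.
Proof.
rewrite /G /S2 big_ord_recr /= subn1 /=; congr (_ + _).
  apply: eq_bigr => h _; congr (_ * _ * _ * _ * _).
  rewrite /dd.
  have -> : ((m.+2 + q)%:Z - 1 - h%:Z) = (((m.+2 + q)%:Z - 1 - h%:Z) - 1) + 1 by rewrite subrK.
  rewrite cZ_pascal addrK.
  have E1 : ((m.+2 + q)%:Z - 1 - h%:Z - 1) = ((m.+2 + q)%:Z - 1 - h.+1%:Z) by lia.
  rewrite E1 addrAC subrr add0r; congr cZ; lia.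
by rewrite /dd !cZ_eq1 //; lia.
Qed.

Lemma G_0 q a x y : G q a 0 x y = (-1) ^+ q * B q x.
Proof.
rewrite /G /dd !cZ0 big1 ?add0r; last by move=> h _; rewrite !cZ0 subrr !mulr0 !mul0r.
by rewrite add0n binn subnn B0 !mulr1 mul1r.
Qed.

Lemma S1_0 q x y : S1 q.+1 0 x y = B q.+1 y + (-1) ^+ q * B q.+1 x.
Proof.
rewrite /S1 add0n big_ord_recl big_ord_recr /= big1 ?add0r.
  rewrite bin0 binn subn0 subnn B0 !mulr1 !mul1r.
  have -> : (q.+1%:Z - 1 - 0%:Z) = q%:Z by lia.
  have -> : (q.+1%:Z - 1 - q.+1%:Z) = -1 by lia.
  rewrite subn1 /= cZnn cZ_neg1 B0 mulr1 mul1r /bump /= add1n.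
  by [].
move=> i _; rewrite /bump /= add1n subn1 /=.
have -> : (q.+1%:Z - 1 - i.+1%:Z) = (q - 1 - i)%N%:Z.
  have := ltn_ord i; lia.
rewrite cZ_nat (@bin_small (q - 1 - i)) ?mulr0 ?mul0r //.
have := ltn_ord i; lia.
Qed.

Lemma dH_succ q a m y x :
  is_derive x 1 (fun t => H q a m.+2 t y) ((m.+2 + q)%:R * H q a m.+1 x y).
Proof.
refine (is_derive_eq (dsub (dsub (dT1 q a m.+1 y x) (dS1 q m.+1 y x)) (dS2raw q a m.+1 y x)) _).
rewrite G_succ /H.
set u := T1 _ _ _ _ _; set v := S1 _ _ _ _; set w := S2 _ _ _ _ _.
ring.
Qed.

Lemma dH_one q a y x : is_derive x 1 (fun t => H q.+1 a 1 t y) 0.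
Proof.
refine (is_derive_eq (dsub (dsub (dT1 q.+1 a 0 y x) (dS1 q.+1 0 y x)) (dS2raw q.+1 a 0 y x)) _).
rewrite G_0 S1_0 /T1 add0n binn B0 mul1r exprS.
set u := B q.+1 y; set v := B q.+1 x; set s := (-1) ^+ q.
ring.
Qed.

Lemma Bdelta j : B j 1 - B j 0 = (j == 1%N)%:R.
Proof. by rewrite Bat1 Bat0 [b j + _]addrC addrK. Qed.

Lemma pick1 n (F : nat -> R) : (1 < n)%N ->
  \sum_(j < n) F j * ((j : nat) == 1%N)%:R = F 1%N.
Proof.
case: n => [|[|n]] // _; rewrite big_ord_recl big_ord_recl big1 /=.
  by rewrite mulr0 mulr1 add0r addr0.
by move=> i _; rewrite mulr0.
Qed.

Lemma hT k a m y : T1 k.+1 a m.+1 1 y - T1 k.+1 a m.+1 0 y =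
  'C(m.+1 + k.+1, k.+1)%:R * (m.+1%:R * (y + a) ^+ m) * B k.+1 y.
Proof.
rewrite /T1 add0r [1 + _]addrC Bdiff /=.
set u := B m.+1 _; set v := B k.+1 y; ring.
Qed.

Lemma hS1 k m y : S1 k.+1 m.+1 1 y - S1 k.+1 m.+1 0 y =
  'C(m.+1 + k.+1, 1)%:R * cZ ((m.+1 + k.+1)%:Z - 1 - 1) k * B (m.+1 + k.+1 - 1) y.
Proof.
rewrite /S1 -sumrB.
under eq_bigr do rewrite -mulrBr Bdelta.
rewrite (@pick1 _ (fun j => 'C(m.+1 + k.+1, j)%:R * cZ ((m.+1 + k.+1)%:Z - 1 - j%:Z) (k.+1 - 1)
   * B (m.+1 + k.+1 - j) y)) //.
by rewrite subn1.
Qed.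

Lemma binR n k : (k <= n)%N ->
  ('C(n, k)%:R : R) = n`!%:R / (k`!%:R * (n - k)`!%:R).
Proof.
move=> kn; have := bin_fact kn => /(congr1 (fun z => z%:R : R)).
rewrite !natrM => <-.
have h1 := fact_neq0 k; have h2 := fact_neq0 (n - k).
by field; rewrite h1 h2.
Qed.

Lemma key_id m q h : (h <= q)%N ->
  ('C(m.+1 + q, h)%:R * 'C(m + q - h, m)%:R * (m.+1 + q - h)%:R : R)
  = 'C(m.+1 + q, q)%:R * m.+1%:R * 'C(q, h)%:R.
Proof.
move=> hq.
have e1 : (m.+1 + q - h = (m + q - h).+1)%N.
  by rewrite addSn subSn // (leq_trans hq) // leq_addl.
have e2 : (m + q - h - m = q - h)%N by rewrite -addnBA // addKn.
have e3 : (m.+1 + q - q = m.+1)%N by rewrite addnK.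
rewrite (@binR (m.+1 + q) h) ?(leq_trans hq) ?leq_addl //.
rewrite (@binR (m + q - h) m); last by rewrite -addnBA // leq_addr.
rewrite (@binR (m.+1 + q) q) ?leq_addl // (@binR q h) // e1 e2 e3 !factS.
have h1 := fact_neq0 h; have h2 := fact_neq0 (q - h); have h3 := fact_neq0 m.
have h4 := fact_neq0 (m + q - h); have h5 := fact_neq0 q.
have h6 : ((m + q - h).+1%:R : R) != 0 by rewrite pnatr_eq0.
have h7 : (m.+1%:R : R) != 0 by rewrite pnatr_eq0.
rewrite !natrM.
field.
by rewrite h1 h2 h3 h4 h5 /= !(addrC 1) !natr1 !pnatr_eq0.
Qed.

Lemma key_id2 m k : ('C(m.+1 + k.+1, k.+1) * m.+1 * k.+1)%:R
  = ((m.+1 + k.+1) * (m.+1 + k.+1 - 1) * 'C(m.+1 + k.+1 - 2, m))%:R :> R.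
Proof.
have e : (m.+1 + k.+1 = (m + k).+2)%N by rewrite addSn addnS.
rewrite e subn1 /= (_ : (m + k).+2 - 2 = m + k)%N; last by rewrite -addn2 addnK.
rewrite !natrM (@binR (m + k).+2 k.+1); last by lia.
rewrite (@binR (m + k) m) ?leq_addr //.
have e2 : ((m + k).+2 - k.+1 = m.+1)%N by rewrite -e addnK.
rewrite e2 (_ : m + k - m = k)%N; last by rewrite addKn.
rewrite !factS !natrM.
have h1 := fact_neq0 k; have h3 := fact_neq0 m; have h4 := fact_neq0 (m + k).
field.
by rewrite h1 h3 /= !(addrC 1) !natr1 !pnatr_eq0.
Qed.

Lemma tl L n h c : L * B n (1 + c) * B h 1 - L * B n (0 + c) * B h 0
  = L * (n%:R * c ^+ n.-1 * b h) + L * B n (c + 1) * (h == 1%N)%:R.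
Proof.
rewrite add0r [1 + c]addrC Bat1 Bat0 Bdiff.
set u := B n c; set v := b h; set e := (h == 1%N)%:R.
ring.
Qed.

Lemma hS2 k a m y : S2 k.+1 a m.+1 1 y - S2 k.+1 a m.+1 0 y =
 'C(m.+1 + k.+1, k.+1)%:R * (m.+1%:R * (y + a) ^+ m) * B k.+1 (y + a + 1)
 + 'C(m.+1 + k.+1, 1)%:R * cZ ((m.+1 + k.+1)%:Z - 1 - 1) m * (-1) * B (m.+1 + k.+1 - 1) (y + a + 1).
Proof.
rewrite /S2 -sumrB.
under eq_bigr => h _ do rewrite tl.
rewrite big_split /=.
rewrite (@pick1 _ (fun h => 'C(m.+1 + k.+1, h)%:R * cZ ((m.+1 + k.+1)%:Z - 1 - h%:Z) (m.+1 - 1)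
   * (-1) ^+ h * B (m.+1 + k.+1 - h) (y + a + 1))) //.
rewrite subn1 /= expr1; congr (_ + _).
rewrite Brefl mulr_sumr; apply: eq_bigr => h _.
have hq : (h <= k.+1)%N by rewrite -ltnS.
have E1 : ((m.+1 + k.+1)%:Z - 1 - h%:Z) = (m + k.+1 - h)%N%:Z.
  by rewrite -subzn; [lia | rewrite (leq_trans hq) // leq_addl].
have E2 : ((m.+1 + k.+1 - h).-1 = m + (k.+1 - h))%N.
  by rewrite addSn subSn ?addnBA // (leq_trans hq) // leq_addl.
rewrite E1 E2 cZ_nat exprD.
set s := (-1) ^+ h; set c := y + a.
transitivity (('C(m.+1 + k.+1, h)%:R * 'C(m + k.+1 - h, m)%:R * (m.+1 + k.+1 - h)%:R)
  * s * c ^+ m * c ^+ (k.+1 - h) * b h); first ring.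
rewrite key_id //; ring.
Qed.

Lemma Hdiff k a m y : (a = 0 \/ a = -1) -> H k.+1 a m.+1 1 y = H k.+1 a m.+1 0 y.
Proof.
move=> ha; apply/eqP; rewrite -subr_eq0; apply/eqP.
have -> : H k.+1 a m.+1 1 y - H k.+1 a m.+1 0 y =
  (T1 k.+1 a m.+1 1 y - T1 k.+1 a m.+1 0 y) - (S1 k.+1 m.+1 1 y - S1 k.+1 m.+1 0 y)
  - (S2 k.+1 a m.+1 1 y - S2 k.+1 a m.+1 0 y).
  by rewrite /H; ring.
rewrite hT hS1 hS2.
have EZ : (m.+1 + k.+1)%:Z - 1 - 1 = (m + k)%N%:Z by lia.
have EM : (m.+1 + k.+1 - 1 = (m + k).+1)%N by rewrite addSn addnS subn1.
rewrite EZ !cZ_nat EM.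
have Ebin : 'C(m + k, k) = 'C(m + k, m).
  by have := @bin_sub (m + k) m (leq_addr k m); rewrite addKn.
rewrite Ebin.
case: ha => ->.
  rewrite !addr0 !Bdiff /=.
  have K2 := key_id2 m k.
  rewrite EM /= (_ : m.+1 + k.+1 - 2 = m + k)%N in K2; last by lia.
  rewrite exprD.
  set u := B k.+1 y; set v := B (m + k).+1 y; set w := y ^+ m; set z := y ^+ k.
  transitivity (w * z * (((m.+1 + k.+1) * (m + k).+1 * 'C(m + k, m))%:R
     - ('C(m.+1 + k.+1, k.+1) * m.+1 * k.+1)%:R)).
    rewrite !natrM bin1; ring.
  by rewrite K2 subrr mulr0.
rewrite subrK.
set u := B k.+1 y; set v := B _ y; ring.
Qed.

Lemma step k a m y : (a = 0 \/ a = -1) ->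
  (forall x, H k.+1 a m.+1 x y = H k.+1 a m.+1 0 y) -> H k.+1 a m.+1 0 y = 0.
Proof.
move=> ha hc.
have D2 : forall t : R, is_derive t 1 (fun t => H k.+1 a m.+2 t y)
    ((m.+2 + k.+1)%:R * H k.+1 a m.+1 0 y).
  by move=> t; refine (is_derive_eq (dH_succ _ _ _ _ _) _); rewrite hc.
have := cst_of_deriv D2 1; rewrite mulr1 (Hdiff k a m.+1 y ha) => E.
have : (m.+2 + k.+1)%:R * H k.+1 a m.+1 0 y = 0.
  by apply: (addrI (H k.+1 a m.+2 0 y)); rewrite addr0 -E.
by move/eqP; rewrite mulf_eq0 pnatr_eq0 /= => /eqP.
Qed.

Lemma H_zero k a m x y : (a = 0 \/ a = -1) -> H k.+1 a m.+1 x y = 0.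
Proof.
move=> ha; elim: m x y => [|m IH] x y.
  have D : forall t : R, is_derive t 1 (fun t => H k.+1 a 1 t y) 0.
    by move=> t; exact: dH_one.
  have hc : forall x, H k.+1 a 1 x y = H k.+1 a 1 0 y.
    by move=> z; rewrite (cst_of_deriv D z) mul0r addr0.
  by rewrite hc (step _ _ _ _ ha hc).
have D : forall t : R, is_derive t 1 (fun t => H k.+1 a m.+2 t y) 0.
  by move=> t; refine (is_derive_eq (dH_succ _ _ _ _ _) _); rewrite IH mulr0.
have hc : forall x, H k.+1 a m.+2 x y = H k.+1 a m.+2 0 y.
  by move=> z; rewrite (cst_of_deriv D z) mul0r addr0.
by rewrite hc (step _ _ _ _ ha hc).
Qed.
End S.

Lemma frac_bounds (R : realType) (X : R) :
  0 <= X - (Num.floor X)%:~R /\ X - (Num.floor X)%:~R < 1.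
Proof.
split; first by rewrite subr_ge0 floor_le.
by rewrite ltrBlDl -[1]/(1%:~R) -intrD floorD1_gt.
Qed.

Theorem theorem3 (R : realType) (X Y : R) (p q : nat) :
  (1 <= p)%N -> (1 <= q)%N ->
  ('C(p + q, q))%:R * bernfun p (X + Y) * bernfun q Y =
    \sum_(j < (p + q).+1)
      ('C(p + q, j))%:R * binomZ R ((p + q)%:Z - 1 - j%:Z) (q - 1)
        * bernfun (p + q - j) Y * bernfun j X
  + \sum_(h < q.+1)
      ('C(p + q, h))%:R * binomZ R ((p + q)%:Z - 1 - h%:Z) (p - 1)
        * (-1) ^+ h * bernfun (p + q - h) (X + Y) * bernfun h X.
Proof.
case: p => // m _; case: q => // k _.
set x := X - (Num.floor X)%:~R; set y := Y - (Num.floor Y)%:~R.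
set e := Num.floor (X + Y) - Num.floor X - Num.floor Y.
set a : R := - e%:~R.
have EXY : X + Y - (Num.floor (X + Y))%:~R = x + (y + a).
  by rewrite /x /y /a /e !intrB; ring.
have ha : a = 0 \/ a = -1.
  have [hx1 hx2] := frac_bounds _ X; have [hy1 hy2] := frac_bounds _ Y.
  have [hz1 hz2] := frac_bounds _ (X + Y).
  rewrite -/x -/y EXY in hx1 hx2 hy1 hy2 hz1 hz2.
  have l1 : (-1 : R) < e%:~R by rewrite /a in hz1 hz2; lra.
  have l2 : (e%:~R : R) < 2 by rewrite /a in hz1 hz2; lra.
  have l1' : (-1 < e)%R by rewrite -(ltr_int R) mulrN1z.
  have l2' : (e < 2)%R by rewrite -(ltr_int R).
  have : e = 0 \/ e = 1 by lia.
  by case => He; [left | right]; rewrite /a He ?oppr0.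
have hB : forall n Z, bernfun n Z = bernpoly n (Z - (Num.floor Z)%:~R) by [].
rewrite !hB EXY -/x -/y.
apply/eqP; rewrite -subr_eq0 opprD addrA; apply/eqP.
under [X in _ - _ - X = _]eq_bigr => h _ do rewrite !hB EXY.
exact: (@H_zero R k a m x y ha).
Qed.
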